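(* Let $\mathcal C$ be a concept hierarchy, $r_1,r_2,\epsilon\in[0,1]$, $a>0$ a real with $r_1\le ar_2(1-\epsilon)$, $m$ a positive integer, and let $\mathcal L$ be the network defined below with fixed sets $F$ and $E$ satisfying the stated constraints. Then $\mathcal L$ $(r_1,r_2)$-recognizes $\mathcal C$: for every $B\subseteq C_0$ presented at time 0, (1) if $c\in supp_{r_2}(B)$ then at least $m(1-\epsilon)$ of the neurons $v\in reps(c)$ fire at time $level(c)$, and (2) if $c\notin supp_{r_1}(B)$ then no neuron $v\in reps(c)$ fires at time $level(c)$.
   Context: Concept hierarchies: fix positive integers $\ell_{max},n,k$. A universal set $D$ of concepts is partitioned into disjoint sets $D_0,\dots,D_{\ell_{max}}$ with $|D_0|=n$; $level(c)=\ell$ for $c\in D_\ell$. A concept hierarchy $\mathcal C$ consists of $C\subseteq D$, with $C_\ell=C\cap D_\ell$, and for each $c\in C_\ell$ with $1\le\ell\le\ell_{max}$ a set $children(c)\subseteq C_{\ell-1}$, such that $|C_{\ell_{max}}|=k$, $|children(c)|=k$ for all such $c$, and $children(c)\cap children(c')=\emptyset$ for distinct $c,c'\in C_\ell$. For $B\subseteq D_0$ and $r\in[0,1]$: $B(0)=B\cap C_0$; for $1\le\ell\le\ell_{max}$, $B(\ell)=\{c\in C_\ell:|children(c)\cap B(\ell-1)|\ge rk\}$; $supp_r(B)=\bigcup_{\ell}B(\ell)$. Network $\mathcal L$: neurons partitioned into layers $N_0,\dots,N_{\ell_{max}}$. Each $c\in D_0$ has a set $reps(c)$ of $m$ neurons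 in $N_0$, each $c\in C$ with $level(c)\ge1$ a set $reps(c)$ of $m$ neurons in $N_{level(c)}$, all pairwise disjoint. $E$ is a set of pairs $(u,v)$ with $v\in reps(c)$ and $u\in reps(c')$ for some child $c'$ of $c$; for $u\in N_{\ell-1}$, $v\in N_\ell$, $w(u,v)=1$ iff $(u,v)\in E$, else $0$. Threshold $\tau=ar_2km(1-\epsilon)$. A fixed set $F$ of neurons is failed (failed neurons never fire). Constraints: for every concept $c$, at least $m(1-\epsilon)$ neurons of $reps(c)$ are not in $F$; and for every $c$ with $level(c)\ge1$, every $v\in reps(c)$ and every child $c'$ of $c$, there are at least $am(1-\epsilon)$ neurons $u\in reps(c')\setminus F$ with $(u,v)\in E$. Input $B\subseteq C_0$ presented at time 0: a layer-0 neuron fires at time 0 iff it is in $\bigcup_{b\in B}reps(b)\setminus F$, and no layer-0 neuron fires at any other time. A non-failed $v\in N_\ell$, $\ell\ge1$, does not fire at time 0 and fires at time $t\ge1$ iff $\sum_{u\in N_{\ell-1}}w(u,v)x_u(t-1)\ge\tau$, where $x_u(s)\in\{0,1\}$ indicates whether $u$ fires at time $s$. *)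

(* Defs.v *)
From HB Require Import structures.
From mathcomp Require Import all_boot all_order all_algebra.
From mathcomp Require Import reals.
Set Implicit Arguments. Unset Strict Implicit. Unset Printing Implicit Defensive.
Import Order.TTheory GRing.Theory Num.Theory.
Local Open Scope ring_scope.

Fixpoint Bset (R : realType) (D : finType) (lev : D -> nat) (C : {set D})
  (children : D -> {set D}) (k : nat) (r : R) (B : {set D}) (l : nat) : {set D} :=
  match l with
  | 0 => B :&: [set c in C | lev c == 0%N]
  | l'.+1 => [set c in C | (lev c == l'.+1) &&
        (r * k%:R <= #|children c :&: Bset lev C children k r B l'|%:R)]
  end.

Definition supp (R : realType) (D : finType) (lev : D -> nat) (C : {set D})
  (children : D -> {set D}) (lmax k : nat) (r : R) (B : {set D}) : {set D} :=
  \bigcup_(l < lmax.+1) Bset lev C children k r B l.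

(* fires t v : neuron v fires at time t.  layer v = index of the layer of v,
   E = edge relation (w(u,v) = 1 iff E u v), F = failed neurons,
   tau = threshold, input B presented at time 0. *)
Fixpoint fires (R : realType) (D N : finType) (layer : N -> nat)
  (reps : D -> {set N}) (E : rel N) (F : {set N}) (tau : R) (B : {set D})
  (t : nat) (v : N) : bool :=
  match t with
  | 0 => [&& layer v == 0%N, v \in \bigcup_(b in B) reps b & v \notin F]
  | t'.+1 => [&& (0 < layer v)%N, v \notin F &
      tau <= \sum_(u : N | layer u == (layer v).-1)
                (E u v)%:R * (fires layer reps E F tau B t' u)%:R]
  end.

(* Main.v *)
Require Import Defs.
From HB Require Import structures.
From mathcomp Require Import all_boot all_order all_algebra.
From mathcomp Require Import reals.
From mathcomp Require Import ring.
Import Order.TTheory GRing.Theory Num.Theory.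
Local Open Scope ring_scope.

Lemma sum_bool2 (R : realType) (T : finType) (P b1 b2 : pred T) :
  \sum_(u | P u) ((b1 u)%:R * (b2 u)%:R : R) = #|[set u | P u && b1 u && b2 u]|%:R.
Proof.
rewrite -sum1_card natr_sum big_mkcond [RHS]big_mkcond /=; apply: eq_bigr => u _.
by rewrite inE; case: (P u); case: (b1 u); case: (b2 u); rewrite ?mulr0 ?mulr1.
Qed.

Lemma card_bigcup_le (I T : finType) (A : {set I}) (X : I -> {set T}) :
  (#|\bigcup_(i in A) X i| <= \sum_(i in A) #|X i|)%N.
Proof.
elim/big_rec2: _ => [|i n U _ IH]; first by rewrite cards0.
by apply: leq_trans (leq_card_setU _ _) _; rewrite leq_add2l.
Qed.

Lemma sum_card_disj (I T : finType) (A : {set I}) (X : I -> {set T}) (S : {set T}) :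
  (forall i, i \in A -> X i \subset S) ->
  (forall i j, i \in A -> j \in A -> i != j -> [disjoint X i & X j]) ->
  (\sum_(i in A) #|X i| <= #|S|)%N.
Proof.
move=> sub dis.
pose X' i := if i \in A then X i else set0.
have -> : (\sum_(i in A) #|X i| = \sum_i #|X' i|)%N.
  rewrite big_mkcond; apply: eq_bigr => i _; rewrite /X'; case: (i \in A) => //.
  by rewrite cards0.
have dX : forall i j, i != j -> [disjoint X' i & X' j].
  move=> i j ij; rewrite /X'; case iA: (i \in A); case jA: (j \in A);
    rewrite ?dis //; [by rewrite disjoint_sym disjoints_subset sub0set|
      by rewrite disjoints_subset sub0set..].
have := partition_disjoint_bigcup addn (fun _ => 1%N) dX.
rewrite sum1_card => H.
have -> : (\sum_i #|X' i| = \sum_i \sum_(x in X' i) 1)%N.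
  by apply: eq_bigr => i _; rewrite sum1_card.
rewrite -H; apply: subset_leq_card; apply/bigcupsP => i _; rewrite /X'.
by case iA: (i \in A); [exact: sub | exact: sub0set].
Qed.

Lemma Bset_lev (R : realType) (D : finType) (lev : D -> nat) (C : {set D})
  (children : D -> {set D}) (k : nat) (r : R) (B : {set D}) (l : nat) c :
  c \in Bset lev C children k r B l -> lev c = l.
Proof.
case: l => [|l] /=; first by rewrite !inE => /and3P[_ _ /eqP].
by rewrite inE => /and3P[_ /eqP].
Qed.

Theorem theorem8p5
  (R : realType) (lmax n k : nat)
  (Hlmax : (0 < lmax)%N) (Hn : (0 < n)%N) (Hk : (0 < k)%N)
  (* universal set of concepts, partitioned by level into D_0 .. D_lmax *)
  (D : finType) (lev : D -> nat)
  (Hlev : forall c, (lev c <= lmax)%N)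
  (HD0 : #|[set c : D | lev c == 0%N]| = n)
  (* the concept hierarchy *)
  (C : {set D}) (children : D -> {set D})
  (HCtop : #|[set c in C | lev c == lmax]| = k)
  (Hchild_sub : forall c, c \in C -> (1 <= lev c)%N ->
     children c \subset [set c' in C | lev c' == (lev c).-1])
  (Hchild_card : forall c, c \in C -> (1 <= lev c)%N -> #|children c| = k)
  (Hchild_disj : forall c c', c \in C -> c' \in C -> (1 <= lev c)%N ->
     lev c = lev c' -> c != c' -> [disjoint children c & children c'])
  (* parameters *)
  (r1 r2 eps a : R)
  (Hr1 : 0 <= r1 <= 1) (Hr2 : 0 <= r2 <= 1) (Heps : 0 <= eps <= 1)
  (Ha : 0 < a) (Hr12 : r1 <= a * r2 * (1 - eps))
  (m : nat) (Hm : (0 < m)%N)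
  (* the network: neurons partitioned into layers N_0 .. N_lmax *)
  (N : finType) (layer : N -> nat)
  (Hlayer : forall v, (layer v <= lmax)%N)
  (reps : D -> {set N})
  (* reps are defined for c in D_0 and for c in C of level >= 1 *)
  (Hreps_card : forall c, (lev c == 0%N) || (c \in C) -> #|reps c| = m)
  (Hreps_layer : forall c, (lev c == 0%N) || (c \in C) ->
     forall v, v \in reps c -> layer v = lev c)
  (Hreps_disj : forall c c', (lev c == 0%N) || (c \in C) ->
     (lev c' == 0%N) || (c' \in C) -> c != c' -> [disjoint reps c & reps c'])
  (E : rel N)
  (HE : forall u v, E u v -> exists c, [/\ c \in C, (1 <= lev c)%N,
     v \in reps c & exists2 c', c' \in children c & u \in reps c'])
  (F : {set N})
  (HF : forall c, (lev c == 0%N) || (c \in C) ->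
     m%:R * (1 - eps) <= #|reps c :\: F|%:R)
  (HFE : forall c, c \in C -> (1 <= lev c)%N -> forall v, v \in reps c ->
     forall c', c' \in children c ->
     a * m%:R * (1 - eps) <= #|[set u in reps c' :\: F | E u v]|%:R) :
  let tau := a * r2 * k%:R * m%:R * (1 - eps) in
  forall B : {set D}, B \subset [set c in C | lev c == 0%N] ->
  forall c, c \in C ->
    (c \in supp lev C children lmax k r2 B ->
       m%:R * (1 - eps) <=
       #|[set v in reps c | fires layer reps E F tau B (lev c) v]|%:R) /\
    (c \notin supp lev C children lmax k r1 B ->
       forall v, v \in reps c -> ~~ fires layer reps E F tau B (lev c) v).
Proof.
move=> tau B HB.
have Hm0 : (0 : R) <= m%:R * (1 - eps).
  by case/andP: Heps => _ e1; rewrite mulr_ge0 // subr_ge0.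
have Hq0 : (0 : R) <= a * m%:R * (1 - eps).
  by rewrite -mulrA mulr_ge0 // ltW.
have inCl : forall c, c \in C -> (lev c == 0%N) || (c \in C) by move=> c ->; rewrite orbT.
have chC : forall c c', c \in C -> (1 <= lev c)%N -> c' \in children c ->
    c' \in C /\ lev c' = (lev c).-1.
  move=> c c' cC lc c'ch; have := subsetP (Hchild_sub c cC lc) c' c'ch.
  by rewrite inE => /andP[-> /eqP].
have main : forall l c, c \in C -> lev c = l ->
  (c \in Bset lev C children k r2 B l -> forall v, v \in reps c -> v \notin F ->
     fires layer reps E F tau B l v) /\
  (c \notin Bset lev C children k r1 B l -> forall v, v \in reps c ->
     ~~ fires layer reps E F tau B l v).
  elim=> [|l IH] c cC lc.
  - split.
    + rewrite /= !inE => /andP[cB _] v vc vF.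
      rewrite (Hreps_layer c (inCl c cC) v vc) lc eqxx vF andbT /=.
      by apply/bigcupP; exists c.
    + rewrite /= !inE cC lc eqxx andbT /= andbT => cB v vc.
      apply/negP => /and3P[_ /bigcupP[b bB vb] _].
      have := subsetP HB b bB; rewrite inE => /andP[bC _].
      have bc : b != c by apply/eqP => bc; subst b; rewrite bB in cB.
      by rewrite (disjointFr (Hreps_disj _ _ (inCl b bC) (inCl c cC) bc) vb) in vc.
  - have lc1 : (1 <= lev c)%N by rewrite lc.
    split.
    + rewrite /= inE cC lc eqxx /= => Hcnt v vc vF.
      have lv : layer v = l.+1 by rewrite (Hreps_layer c (inCl c cC) v vc).
      rewrite lv vF /= sum_bool2.
      set A := children c :&: Bset lev C children k r2 B l.
      pose X c' := [set u in reps c' :\: F | E u v].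
      have H1 : (\sum_(c' in A) #|X c'| <=
          #|[set u | (layer u == l) && E u v && fires layer reps E F tau B l u]|)%N.
        apply: sum_card_disj.
        * move=> c' /setIP[c'ch c'B]; have [c'C lc'] := chC c c' cC lc1 c'ch.
          rewrite lc /= in lc'.
          apply/subsetP => u; rewrite !inE => /andP[/andP[uF uc'] Euv].
          rewrite Euv (Hreps_layer c' (inCl c' c'C) u uc') lc' eqxx /=.
          by apply: (proj1 (IH c' c'C lc')) => //.
        * move=> i j /setIP[ich _] /setIP[jch _] ij.
          have [iC _] := chC c i cC lc1 ich; have [jC _] := chC c j cC lc1 jch.
          have := Hreps_disj _ _ (inCl i iC) (inCl j jC) ij.
          apply: disjointW; apply/subsetP => u; rewrite !inE => /andP[/andP[_ ->]].
          by [].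
          by [].
      apply: le_trans (_ : \sum_(c' in A) (#|X c'|%:R : R) <= _); last first.
        by rewrite -natr_sum ler_nat.
      apply: le_trans (_ : \sum_(c' in A) (a * m%:R * (1 - eps)) <= _); last first.
        apply: ler_sum => c' /setIP[c'ch _].
        exact: HFE c cC lc1 v vc c' c'ch.
      rewrite sumr_const -[_ *+ #|A|]mulr_natr.
      have -> : tau = (a * m%:R * (1 - eps)) * (r2 * k%:R) by rewrite /tau; ring.
      move: (ler_wpM2l Hq0 Hcnt) => HH; exact HH.
    + rewrite /= inE cC lc eqxx /= -ltNge => Hcnt v vc.
      apply/negP => /and3P[_ _]; apply/negP; rewrite -ltNge.
      have lv : layer v = l.+1 by rewrite (Hreps_layer c (inCl c cC) v vc).
      rewrite lv /= sum_bool2.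
      set A := children c :&: Bset lev C children k r1 B l.
      have H1 : ([set u | (layer u == l) && E u v && fires layer reps E F tau B l u]
                 \subset \bigcup_(c' in A) reps c').
        apply/subsetP => u; rewrite inE => /andP[/andP[_ Euv] fu].
        have [c0 [c0C _ vc0 [c' c'ch uc']]] := HE u v Euv.
        have c0c : c0 = c.
          apply/eqP; apply/negPn/negP => ne.
          by rewrite (disjointFr (Hreps_disj _ _ (inCl c0 c0C) (inCl c cC) ne) vc0) in vc.
        subst c0.
        have [c'C lc'] := chC c c' cC lc1 c'ch; rewrite lc /= in lc'.
        apply/bigcupP; exists c' => //; rewrite inE c'ch /=.
        apply/negPn/negP => nB.
        by rewrite (negbTE (proj2 (IH c' c'C lc') nB u uc')) in fu.
      have H2 := leq_trans (subset_leq_card H1) (@card_bigcup_le _ _ A reps).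
      have H3 : (\sum_(c' in A) #|reps c'| = #|A| * m)%N.
        rewrite (eq_bigr (fun _ => m)); first by rewrite sum_nat_const mulnC.
        move=> c' /setIP[c'ch _]; have [c'C _] := chC c c' cC lc1 c'ch.
        exact: Hreps_card c' (inCl c' c'C).
      rewrite H3 in H2.
      apply: le_lt_trans (_ : ((#|A| * m)%N%:R : R) < _); first by rewrite ler_nat.
      rewrite natrM.
      have Mpos : (0 : R) < m%:R by rewrite ltr0n.
      apply: lt_le_trans (_ : r1 * k%:R * m%:R <= _); first by rewrite ltr_pM2r.
      have -> : tau = (a * r2 * (1 - eps)) * (k%:R * m%:R) by rewrite /tau; ring.
      by rewrite -mulrA ler_wpM2r // mulr_ge0.
move=> c cC; split.
- move=> /bigcupP[l _ cl].
  have lc := @Bset_lev _ _ _ _ _ _ _ _ _ _ cl; rewrite -lc in cl.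
  have [H _] := main (lev c) c cC erefl.
  apply: le_trans (HF c (inCl c cC)) _; rewrite ler_nat; apply: subset_leq_card.
  apply/subsetP => v; rewrite !inE => /andP[vF vc]; rewrite vc /=.
  exact: H.
- move=> ncs; apply: (proj2 (main (lev c) c cC erefl)).
  apply: contra ncs => cl.
  have lt : (lev c < lmax.+1)%N by rewrite ltnS Hlev.
  by apply/bigcupP; exists (Ordinal lt).
Qed.
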